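(* Let $\mathbb{T}_S$ be a spherically symmetric tree with origin $\mathcal{O}$, and consider the cone percolation process on $\mathbb{T}_S$ with radius of influence $R$ satisfying $\mathbb{P}(R=k)=\frac{Z_\alpha}{(k+1)^\alpha}$ for $k=1,2,\dots$, where $\alpha>1$ and $Z_\alpha>0$ are constants. If $\dim\inf\partial\mathbb{T}_S>0$, then $\mathbb{P}(V)>0$.
   Context: Cone percolation process: Let $\mathbb{T}$ be a tree with origin $\mathcal{O}$ and graph distance $d(\cdot,\cdot)$. Write $u\le v$ if $u$ lies on the path from $\mathcal{O}$ to $v$. Let $R$ be a random variable with values in $\{0,1,2,\dots\}$, $p_k=\mathbb{P}(R=k)$, and assume $p_0\in(0,1)$. Let $\{R_v\}$ be i.i.d. copies of $R$ indexed by the vertices. For each vertex $u$ let $B_u=\{v: u\le v,\ d(u,v)\le R_u\}$. Set $I_0=\{\mathcal{O}\}$, $I_{n+1}=\bigcup_{u\in I_n}B_u$, $I=\bigcup_n I_n$; survival is the event $V=\{|I|=\infty\}$. A tree is spherically symmetric if any two vertices at the same distance from $\mathcal{O}$ have the same degree. For a vertex $u$ and $n\ge1$, $M_n(u)=|\{v: u\le v,\ d(v,\mathcal{O})=d(u,\mathcal{O})+n\}|$, and $\dim\inf\partial\mathbb{T}:=\lim_{n\to\infty}\min_{v}\frac1n\ln M_n(v)$ (assumed to exist). *)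

(* Defs.v *)
From HB Require Import structures.
From mathcomp Require Import all_boot all_order all_algebra.
From mathcomp Require Import all_classical all_reals all_analysis.
Set Implicit Arguments. Unset Strict Implicit. Unset Printing Implicit Defensive.
Import Order.TTheory GRing.Theory Num.Theory.
Local Open Scope classical_set_scope.
Local Open Scope ring_scope.

(* A spherically symmetric tree is encoded (up to isomorphism) by its offspring
   sequence c : every vertex at distance k from the origin has exactly c k
   children.  Vertices are the sequences [:: i_1; ...; i_n] with i_k < c (k-1);
   the origin is [::]; u <= v iff u is a prefix of v, and then d(u,v) = size v - size u;
   in general d(O, v) = size v. *)
Definition vtx (c : nat -> nat) (v : seq nat) : Prop :=
  forall k, (k < size v)%N -> (nth 0%N v k < c k)%N.

(* M_n(v) : number of descendants of v at distance n below v *)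
Definition Mdesc (c : nat -> nat) (n : nat) (v : seq nat) : nat :=
  (\prod_(size v <= k < size v + n) c k)%N.

Definition lnE {R : realType} (x : nat) : \bar R :=
  (if x == 0%N then -oo else (ln (x%:R : R))%:E)%E.

(* the n-th term of the limit defining dim inf of the boundary:
   inf over vertices v of (1/n) ln M_n(v) *)
Definition dim_term {R : realType} (c : nat -> nat) (n : nat) : \bar R :=
  ereal_inf [set (lnE (Mdesc c n v) * (n%:R^-1)%:E)%E | v in vtx c].

Definition cone (c : nat -> nat) (r : nat) (u : seq nat) : set (seq nat) :=
  [set v | vtx c v /\ prefix u v /\ (size v <= size u + r)%N].

Fixpoint Ilevel (c : nat -> nat) (Rad : seq nat -> nat) (n : nat) : set (seq nat) :=
  match n with
  | 0 => [set [::]]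
  | n.+1 => \bigcup_(u in Ilevel c Rad n) cone c (Rad u) u
  end.

Definition Iall (c : nat -> nat) (Rad : seq nat -> nat) : set (seq nat) :=
  \bigcup_n Ilevel c Rad n.

Definition survival {T : Type} (c : nat -> nat) (Rad : seq nat -> T -> nat) : set T :=
  [set w | ~ finite_set (Iall c (fun v => Rad v w))].

Definition mutually_independent {d : measure_display} {T : measurableType d}
  {R : realType} (P : probability T R) (X : seq nat -> T -> nat) (D : set (seq nat)) : Prop :=
  forall (s : seq (seq nat)) (A : seq nat -> set nat),
    uniq s -> (forall v, v \in s -> D v) ->
    P (\bigcap_(v in [set` s]) (X v @^-1` A v)) =
    (\prod_(v <- s) P (X v @^-1` A v))%E.

(* Main.v *)
Require Import Defs.
From HB Require Import structures.
From mathcomp Require Import all_boot all_order all_algebra.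
From mathcomp Require Import all_classical all_reals all_analysis.
Import Order.TTheory GRing.Theory Num.Theory.
Local Open Scope classical_set_scope.
Local Open Scope ring_scope.
From mathcomp Require Import ring lra zify.
Set Implicit Arguments. Unset Strict Implicit.
Section RealPart.
Variable R : realType.

Lemma bern (q : R) n : 0 <= q <= 1 -> (1 - q) ^+ n * (1 + n%:R * q) <= 1.
Proof.
move=> /andP [q0 q1]; elim: n => [|n IH]; first by rewrite expr0 mul0r addr0 mulr1.
rewrite exprS -mulrA.
have x0 : 0 <= (1 - q) ^+ n by apply: exprn_ge0; lra.
set x := (1 - q) ^+ n in x0 IH *.
rewrite -natr1 /=.
have n0 : 0 <= n%:R :> R by [].
have h : 0 <= x * ((n%:R + 1) * q ^+ 2) by apply: mulr_ge0 => //; apply: mulr_ge0; [lra | exact: sqr_ge0].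
have -> : (1 - q) * (x * (1 + (n%:R + 1) * q)) = x * (1 + n%:R * q) - x * ((n%:R + 1) * q ^+ 2) by ring.
lra.
Qed.

Lemma key_real (q q0 Z CK pa pb pD pL pj pm N n : R) :
  0 < Z -> 0 < CK -> 0 <= q <= 1 -> 0 < pa -> 0 < pb -> 0 < pD -> 0 < pL -> 0 < pj ->
  0 <= N -> 0 <= n ->
  Z <= q * (CK * pa) -> Z <= q0 * (CK * pb) -> CK ^+ 2 <= Z ^+ 2 * pD ->
  N <= pL -> pm <= n -> pD * pL * pa * pb * pj <= pm ->
  forall u, 0 <= u -> u * (n * q) <= 1 ->
  N * u <= q0 / pj.
Proof.
move=> Z0 CK0 /andP[q_0 q1] pa0 pb0 pD0 pL0 pj0 N0 n0 hq hq0 hD hN hn hE u u0 hu.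
rewrite ler_pdivlMr //.
have h2 : u * Z * pm <= CK * pa.
  have e1 : u * Z * pm <= u * Z * n by apply: ler_wpM2l => //; nra.
  have e2 : u * Z * n <= u * n * (q * (CK * pa)).
    rewrite -mulrA (mulrC Z) -mulrA. apply: ler_wpM2l => //.
    by apply: ler_wpM2l.
  have e3 : u * n * (q * (CK * pa)) <= CK * pa.
    have -> : u * n * (q * (CK * pa)) = (u * (n * q)) * (CK * pa) by ring.
    rewrite -[X in _ <= X]mul1r; apply: ler_wpM2r => //; nra.
  lra.
have pm0 : 0 < pm by apply: lt_le_trans hE; rewrite !mulr_gt0.
have S0 : 0 <= u * pj * (CK * pb) * (Z * pm).
  by rewrite !mulr_ge0 // ltW // mulr_gt0.
have g1 : N * u * pj * (CK * pb) * (Z * pm) <= (pL * pj * CK * pb) * (u * Z * pm).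
  have -> : (pL * pj * CK * pb) * (u * Z * pm) = pL * (u * pj * (CK * pb) * (Z * pm)) by ring.
  have -> : N * u * pj * (CK * pb) * (Z * pm) = N * (u * pj * (CK * pb) * (Z * pm)) by ring.
  exact: ler_wpM2r.
have P0 : 0 <= pL * pj * CK * pb by rewrite !mulr_ge0 // ltW.
have g2 : (pL * pj * CK * pb) * (u * Z * pm) <= (pL * pj * CK * pb) * (CK * pa).
  exact: ler_wpM2l.
have Q0 : 0 <= pL * pj * pb * pa by rewrite !mulr_ge0 // ltW.
have g3 : (pL * pj * CK * pb) * (CK * pa) <= Z ^+ 2 * pm.
  have -> : (pL * pj * CK * pb) * (CK * pa) = CK ^+ 2 * (pL * pj * pb * pa) by ring.
  apply: (le_trans (ler_wpM2r Q0 hD)).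
  have -> : Z ^+ 2 * pD * (pL * pj * pb * pa) = Z ^+ 2 * (pD * pL * pa * pb * pj) by ring.
  by apply: ler_wpM2l => //; exact: sqr_ge0.
have g4 : N * u * pj * (CK * pb) <= Z.
  have Zpm : 0 < Z * pm by rewrite mulr_gt0.
  rewrite -(ler_pM2r Zpm).
  have -> : Z * (Z * pm) = Z ^+ 2 * pm by ring.
  lra.
have CKpb : 0 < CK * pb by rewrite mulr_gt0.
rewrite -(ler_pM2r CKpb); lra.
Qed.
End RealPart.
Section QLow.
Variable R : realType.
Lemma q_lower (Z alpha : R) (K A e : nat) : 0 < Z -> 0 < alpha -> alpha <= A%:R -> (0 < K)%N ->
  Z <= Z / ((K * 2 ^ e).+1%:R `^ alpha) * (((2 * K) ^ A)%:R * (2 ^ (A * e))%:R).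
Proof.
move=> Z0 a0 aA K0.
set x : R := (K * 2 ^ e).+1%:R.
have x1 : 1 <= x by rewrite /x ler1n.
have X0 : 0 < x `^ alpha by apply: powR_gt0; apply: lt_le_trans x1.
have Hle : x `^ alpha <= ((2 * K) ^ A)%:R * (2 ^ (A * e))%:R.
  apply: le_trans (ler_powR x1 aA) _.
  rewrite powR_mulrn; last by apply: le_trans x1.
  rewrite /x -natrX -natrM ler_nat (mulnC A e) expnM -expnMn.
  have Hb : ((K * 2 ^ e).+1 <= 2 * K * 2 ^ e)%N.
    have : (0 < K * 2 ^ e)%N by rewrite muln_gt0 K0 expn_gt0.
    rewrite -mulnA; lia.
  elim: (A) => // a IH; rewrite !expnS leq_mul //.
rewrite -mulrA ler_pMr // ler_pdivlMl // mulr1 //.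
Qed.
End QLow.
Section NatPart.
Local Open Scope nat_scope.

Lemma sq_exp x : 4 <= x -> x * x <= 2 ^ x.
Proof.
move=> Hx; rewrite -(subnK Hx); elim: (x - 4) => [|n IH] //.
rewrite addSn expnS.
have H1 : (n + 4).+1 * (n + 4).+1 <= 2 * ((n + 4) * (n + 4)) by nia.
apply: leq_trans H1 _; by rewrite leq_mul2l IH.
Qed.

Lemma lin_exp a b : exists x0, forall x, x0 <= x -> a * x + b <= 2 ^ x.
Proof.
exists (a + b + 4) => x Hx.
have Hs : x * x <= 2 ^ x by apply: sq_exp; lia.
have : a * x + b <= x * x by nia.
lia.
Qed.

Variables (K A D e0 : nat).
Definition ee j := e0 + K.+1 * j.
Definition rr j := K * 2 ^ ee j.
Fixpoint LL j := if j is j'.+1 then LL j' + rr j' else 0.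

Hypothesis Kpos : 0 < K.

Lemma LL_bound j : 2 * LL j <= 2 ^ ee j.
Proof.
elim: j => [|j IH] //=.
have -> : ee j.+1 = ee j + K.+1 by rewrite /ee mulnS; lia.
rewrite expnD mulnDr /rr.
have HK : 2 * K + 1 <= 2 ^ K.+1 by rewrite expnS; have := ltn_expl K (ltnSn 1); lia.
have := leq_mul (leqnn (2 ^ ee j)) HK.
nia.
Qed.

Lemma LL_ge j : j <= LL j.
Proof.
elim: j => [|j IH] //=; rewrite /rr.
have : 0 < K * 2 ^ ee j by rewrite muln_gt0 Kpos expn_gt0.
lia.
Qed.

Lemma rr_pos j : 0 < rr j.
Proof. by rewrite /rr muln_gt0 Kpos expn_gt0. Qed.

Hypothesis He0 : forall x, e0 <= x -> (4 * A + 2) * x + 2 * (D + A * K.+1 + 2) <= 2 ^ x.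

Lemma cond_nat j : D + LL j + A * ee j.+1 + A * ee 0 + j + 2 <= 2 ^ ee j.
Proof.
have h1 := LL_bound j.
have h2 : e0 <= ee j by rewrite /ee leq_addr.
have h3 := He0 h2.
have h4 : j <= ee j by rewrite /ee; nia.
have -> : ee j.+1 = ee j + K.+1 by rewrite /ee mulnS; lia.
have -> : ee 0 = e0 by rewrite /ee muln0 addn0.
nia.
Qed.

End NatPart.
Section Comb.
Local Open Scope nat_scope.
Variable c : nat -> nat.

Fixpoint ext (u : seq nat) (r : nat) : seq (seq nat) :=
  if r is r'.+1 then
    [seq rcons w i | w <- ext u r', i <- iota 0 (minn (c (size u + r')) 2)]
  else [:: u].

Lemma ext_size u r w : w \in ext u r -> size w = size u + r.
Proof.
elim: r w => [|r IH] w /=; first by rewrite inE addn0 => /eqP ->.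
case/allpairsP => [[w' i]] /= [/IH Hw _ ->].
by rewrite size_rcons Hw addnS.
Qed.

Lemma ext_uniq u r : uniq (ext u r).
Proof.
elim: r => [|r IH] //=.
apply: allpairs_uniq => //; first exact: iota_uniq.
by move=> [a b] [a' b'] _ _ /= /rcons_inj [-> ->].
Qed.

Lemma size_ext u r : size (ext u r) = \prod_(size u <= k < size u + r) minn (c k) 2.
Proof.
elim: r => [|r IH] /=; first by rewrite addn0 big_geq.
by rewrite size_allpairs size_iota IH addnS big_nat_recr //= leq_addr.
Qed.

Lemma ext_vtx u r w : vtx c u -> w \in ext u r -> vtx c w.
Proof.
move=> Hu; elim: r w => [|r IH] w /=; first by rewrite inE => /eqP ->.
case/allpairsP => [[w' i]] /= [Hw' Hi ->].
have Hs := ext_size Hw'.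
move=> k; rewrite size_rcons ltnS leq_eqVlt => /orP [/eqP ->|Hk].
  rewrite nth_rcons ltnn eqxx; rewrite mem_iota add0n in Hi.
  move: Hi; rewrite Hs => /andP [_ Hi]; apply: leq_trans Hi _; exact: geq_minl.
by rewrite nth_rcons Hk; apply: IH.
Qed.

Lemma ext_prefix u r w : w \in ext u r -> prefix u w.
Proof.
elim: r w => [|r IH] w /=; first by rewrite inE => /eqP ->; rewrite prefix_refl.
case/allpairsP => [[w' i]] /= [Hw' _ ->].
exact: prefix_trans (IH _ Hw') (prefix_rcons _ _).
Qed.

Lemma ext_trans v a u b w : u \in ext v a -> w \in ext u b -> w \in ext v (a + b).
Proof.
move=> Hu; elim: b w => [|b IH] w /=; first by rewrite inE addn0 => /eqP ->.
case/allpairsP => [[w' i]] /= [Hw' Hi ->].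
rewrite addnS /=; apply/allpairsP; exists (w', i); split => //.
  exact: IH.
by rewrite (ext_size Hu) -addnA in Hi.
Qed.

End Comb.
Section Comb2.
Local Open Scope nat_scope.

Lemma prod_min2 (s : seq nat) (F : nat -> nat) : (forall i, 0 < F i) ->
  2 <= \prod_(i <- s) F i -> 2 <= \prod_(i <- s) minn (F i) 2.
Proof.
move=> Fp; elim: s => [|x s IH]; first by rewrite !big_nil.
rewrite !big_cons.
have Hp : 0 < \prod_(i <- s) minn (F i) 2.
  by apply: prodn_gt0 => i; rewrite leq_min Fp.
case: (leqP 2 (F x)) => Hx.
  move=> _; by rewrite -{1}(muln1 2) leq_mul2l.
have -> : F x = 1 by have := Fp x; case: (F x) Hx => [|[|]].
by rewrite !mul1n => /IH.
Qed.

Variable c : nat -> nat.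
Variable K : nat.
Hypothesis Kpos : 0 < K.
Hypothesis HM : forall v, vtx c v -> 2 <= Mdesc c K v.

Lemma c_pos l : 0 < c l.
Proof.
elim/ltn_ind: l => l IH.
have Hv : vtx c (nseq l 0).
  by move=> k; rewrite size_nseq => Hk; rewrite nth_nseq Hk; apply: IH.
have := HM Hv; rewrite /Mdesc size_nseq big_ltn; last by rewrite -{1}[l]addn0 ltn_add2l.
by case: (c l).
Qed.

Lemma window l : 2 <= \prod_(l <= k < l + K) minn (c k) 2.
Proof.
apply: prod_min2; first exact: c_pos.
have Hv : vtx c (nseq l 0).
  by move=> k; rewrite size_nseq => Hk; rewrite nth_nseq Hk; apply: c_pos.
by have := HM Hv; rewrite /Mdesc size_nseq.
Qed.

Lemma window_pow m l : 2 ^ m <= \prod_(l <= k < l + K * m) minn (c k) 2.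
Proof.
elim: m => [|m IH]; first by rewrite muln0 addn0 big_geq.
rewrite mulnS (addnC K) addnA (@big_cat_nat _ _ _ (l + K * m)) ?leq_addr //=.
by rewrite expnS mulnC leq_mul // window.
Qed.

Lemma size_ext_ge u m : 2 ^ m <= size (ext c u (K * m)).
Proof. by rewrite size_ext window_pow. Qed.

Lemma size_ext_le u L : size (ext c u L) <= 2 ^ L.
Proof.
rewrite size_ext.
apply: (@leq_trans (\prod_(size u <= k < size u + L) 2)).
  by apply: leq_prod => i _; exact: geq_minr.
by rewrite prod_nat_const_nat addKn.
Qed.

End Comb2.
Lemma dim_pos (R : realType) c :
  (exists2 dim : R, 0 < dim & dim_term c @ \oo --> dim%:E) ->
  exists K, (0 < K)%N /\ forall v, vtx c v -> (2 <= Mdesc c K v)%N.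
Proof.
case=> dim dpos /fine_cvgP [Hfin Hcv].
have Hgt : \forall n \near \oo, 0 < fine (@dim_term R c n).
  exact: (@cvgr_gt R nat \oo _ (fine \o dim_term c) dim Hcv 0 dpos).
have [N _ HN] := filterI Hfin Hgt.
have /= [Hf Hp] := HN N.+1 (leqW (leqnn N)).
exists N.+1; split => // v Hv.
have Hle : (@dim_term R c N.+1 <= @lnE R (Mdesc c N.+1 v) * (N.+1%:R^-1)%:E)%E.
  apply: ereal_inf_lbound; by exists v.
have Hpos : (0 < @dim_term R c N.+1)%E.
  by rewrite -(fineK Hf) lte_fin.
have := lt_le_trans Hpos Hle.
rewrite /lnE; case: (Mdesc c N.+1 v) => [|[|m]] //=.
- by rewrite gt0_mulNye // lte_fin invr_gt0 ltr0n.
- by rewrite ln1 mul0e ltxx.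
Qed.
Unset Implicit Arguments.
Section Prob.
Variables (R : realType) (c : nat -> nat) (d : measure_display) (T : measurableType d)
  (P : probability T R) (Rad : seq nat -> T -> nat).
Hypothesis Hmeas : forall v k, vtx c v -> measurable (Rad v @^-1` [set k]).
Hypothesis Hind : mutually_independent P Rad (vtx c).

Lemma meas_pre v (A : set nat) : vtx c v -> measurable (Rad v @^-1` A).
Proof.
move=> Hv.
have -> : Rad v @^-1` A = \bigcup_(k in A) Rad v @^-1` [set k].
  apply/seteqP; split => [w /= Aw|w [k Ak /= ->]] //; by exists (Rad v w).
by apply: bigcup_measurable => k _; exact: Hmeas.
Qed.

Lemma prob_neq v t : vtx c v ->
  P (Rad v @^-1` [set k | k != t]) = (1 - P (Rad v @^-1` [set t]))%E.
Proof.
move=> Hv; rewrite -probability_setC; last exact: Hmeas.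
congr (P _); apply/seteqP; split => w /=; by move/eqP.
Qed.

Lemma prod_const_seq (I : Type) (s : seq I) (x : R) : \prod_(i <- s) x = x ^+ size s.
Proof. by elim: s => [|a s IH]; rewrite ?big_nil ?expr0 // big_cons IH exprS. Qed.

Lemma avoid_prob (s : seq (seq nat)) t (q : R) :
  uniq s -> (forall v, v \in s -> vtx c v) ->
  (forall v, v \in s -> P (Rad v @^-1` [set t]) = q%:E) ->
  P (\bigcap_(w in [set` s]) Rad w @^-1` [set k | k != t]) = ((1 - q) ^+ size s)%:E.
Proof.
move=> us vs qs.
rewrite (Hind s (fun _ => [set k | k != t]) us vs).
rewrite (eq_big_seq (fun _ => (1 - q)%:E)); last first.
  move=> v vin; rewrite prob_neq; last exact: vs.
  by have := qs _ vin; move=> ->; rewrite EFinB.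

by elim: (s) => [|a s' IH]; rewrite ?big_nil ?expr0 // big_cons IH /= exprS EFinM.
Qed.

Lemma union_bound (s : seq (seq nat)) (E : seq nat -> set T) (x : R) :
  (forall u, u \in s -> measurable (E u)) -> (forall u, u \in s -> (P (E u) <= x%:E)%E) ->
  (P (\bigcup_(u in [set` s]) E u) <= (x *+ size s)%:E)%E.
Proof.
rewrite bigcup_seq; elim: s => [|a s IH] mE PE.
  by rewrite big_nil measure0.
rewrite big_cons /= mulrS EFinD.
have mrest : measurable (\big[setU/set0]_(t <- s) E t).
  rewrite -bigcup_seq; apply: fin_bigcup_measurable; first by apply/finite_seqP; exists s.
  by move=> u /= us; apply: mE; rewrite inE us orbT.
apply: le_trans (measureU2 _ _ _) _ => //; first by apply: mE; rewrite inE eqxx.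
apply: leeD; first by apply: PE; rewrite inE eqxx.
by apply: IH => u us; [apply: mE | apply: PE]; rewrite inE us orbT.
Qed.


Lemma vtx_take v i : vtx c v -> vtx c (take i v).
Proof.
move=> Hv k; rewrite size_take_min leq_min => /andP [Hi Hs].
rewrite nth_take //; exact: Hv.
Qed.

Definition Lev n v := [set w | Ilevel c (fun u => Rad u w) n v].

Lemma Lev_meas n v : measurable (Lev n v).
Proof.
elim: n v => [|n IH] v.
  have [->|nv] := eqVneq v [::].
    by have -> : Lev 0 [::] = setT by apply/seteqP; split.
  have -> : Lev 0 v = set0 by apply/seteqP; split => // w /= /eqP; rewrite (negbTE nv).
  exact: measurable0.
have [Hv|Hv] := pselect (vtx c v); last first.
  have -> : Lev n.+1 v = set0.
    by apply/seteqP; split => // w /= [u _ []].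
  exact: measurable0.
have -> : Lev n.+1 v = \bigcup_(i in [set i | (i <= size v)%N])
    (Lev n (take i v) `&` Rad (take i v) @^-1` [set k | (size v <= i + k)%N]).
  apply/seteqP; split => w /=.
    move=> [u Hu [_ [Hp Hs]]].
    move: Hp; rewrite prefixE => /eqP Hp.
    have Hsu : (size u <= size v)%N by rewrite -Hp size_take; case: ifP => // /ltnW.
    exists (size u) => //=; rewrite Hp; split => //.
  move=> [i /= Hi [H1 H2]]; exists (take i v) => //; split => //; split => //.
    by rewrite prefixE size_takel.
  by rewrite size_takel.
apply: bigcup_measurable => i _; apply: measurableI; first exact: IH.
by apply: meas_pre; exact: vtx_take.
Qed.

Definition Mem v := [set w | Iall c (fun u => Rad u w) v].

Lemma Mem_meas v : measurable (Mem v).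
Proof.
have -> : Mem v = \bigcup_n Lev n v by apply/seteqP; split => w [n _ h]; exists n.
by apply: bigcupT_measurable => n; exact: Lev_meas.
Qed.

Lemma cbigcup_meas (U : countType) (A : set U) (F : U -> set T) :
  (forall v, measurable (F v)) -> measurable (\bigcup_(v in A) F v).
Proof.
move=> mF; rewrite bigcup_mkcond; apply: countable_bigcupT_measurable.
  exact: countableP.
by move=> v; case: ifP => _ //; exact: measurable0.
Qed.

Lemma survival_meas : measurable (survival c Rad).
Proof.
have -> : survival c Rad =
    ~` \bigcup_(s in [set: seq (seq nat)]) ~` \bigcup_(v in ~` [set` s]) Mem v.
  apply/seteqP; split => w /=.
    move=> Hinf [s _ Hs]; apply: Hinf.
    apply: (@sub_finite_set _ _ [set` s]); last by apply/finite_seqP; exists s.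
    move=> v Iv; apply/negP => vs; apply: Hs; exists v => //=; exact/negP.
  move=> H Hfin; apply: H.
  have [s Hs] := (finite_seqP _).1 Hfin.
  exists s => //; move=> [v /= vs]; rewrite /Mem /= Hs /=; exact: vs.
apply: measurableC; apply: cbigcup_meas => s.
by apply: measurableC; apply: cbigcup_meas => v; exact: Mem_meas.
Qed.

Lemma vtx_nil : vtx c [::].
Proof. by []. Qed.

Lemma size_le_sum (s : seq (seq nat)) v : v \in s -> (size v <= \sum_(x <- s) size x)%N.
Proof.
elim: s => [|a s IH] //; rewrite inE big_cons => /orP [/eqP ->|/IH H].
  exact: leq_addr.
exact: leq_trans H (leq_addl _ _).
Qed.

Lemma chain (r L : nat -> nat) w : L 0 = 0%N -> (forall j, L j.+1 = L j + r j)%N ->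
  (forall j, j <= L j)%N -> Rad [::] w = r 0%N ->
  (forall j u, u \in ext c [::] (L j) -> exists2 w', w' \in ext c u (r j) & Rad w' w = r j.+1) ->
  survival c Rad w.
Proof.
move=> L0 LS Lge R0 G.
have inv : forall j, exists u, [/\ u \in ext c [::] (L j), Rad u w = r j &
    exists n, Ilevel c (fun u => Rad u w) n u].
  elim=> [|j [u [Hu Ru [n Hn]]]].
    by exists [::]; rewrite L0 /= inE; split => //; exists 0%N.
  have [w' Hw' Rw'] := G _ _ Hu.
  exists w'; split => //; first by rewrite LS; exact: ext_trans Hu Hw'.
  exists n.+1; exists u => //; split.
    by apply: (ext_vtx _ Hw'); exact: ext_vtx vtx_nil Hu.
  split; first exact: ext_prefix Hw'.
  by rewrite (ext_size Hw') Ru.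
move=> Hfin; have [s Hs] := (finite_seqP _).1 Hfin.
have [u [Hu _ [n Hn]]] := inv (\sum_(x <- s) size x).+1.
have : u \in s.
  have : Iall c (fun u => Rad u w) u by exists n.
  by rewrite Hs.
move/size_le_sum; rewrite (ext_size Hu) /= add0n.
have := Lge (\sum_(x <- s) size x).+1.
move=> H1 H2; have := leq_trans H1 H2; by rewrite ltnn.
Qed.

End Prob.
Unset Implicit Arguments. Set Strict Implicit.
Theorem corollary4 (R : realType) (c : nat -> nat)
  (d : measure_display) (T : measurableType d) (P : probability T R)
  (Rad : seq nat -> T -> nat) (alpha Z : R) :
  1 < alpha -> 0 < Z ->
  (forall v k, vtx c v -> measurable (Rad v @^-1` [set k])) ->
  mutually_independent P Rad (vtx c) ->
  (forall v k, vtx c v -> (0 < k)%N ->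
     P (Rad v @^-1` [set k]) = (Z / (k.+1%:R `^ alpha))%:E) ->
  (forall v, vtx c v -> (0 < P (Rad v @^-1` [set 0%N]) < 1)%E) ->
  (exists2 dim : R, 0 < dim & dim_term c @ \oo --> dim%:E) ->
  (0 < P (survival c Rad))%E.
Proof.
move=> a1 Z0 Hmeas Hind Hdist _ Hdim.
have [K [Kpos HM]] := dim_pos Hdim.
pose A := (Num.truncn alpha).+1.
have aA : alpha <= A%:R by apply: ltW; exact: truncnS_gt.
have a0 : 0 < alpha by apply: lt_trans a1.
pose CK : R := ((2 * K) ^ A)%:R.
have CK0 : 0 < CK by rewrite ltr0n expn_gt0 muln_gt0 Kpos.
pose D := Num.truncn (CK ^+ 2 / Z ^+ 2).
have HD : CK ^+ 2 <= Z ^+ 2 * (2 ^ D)%:R.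
  have Z2 : 0 < Z ^+ 2 by rewrite exprn_gt0.
  rewrite mulrC -ler_pdivrMr //.
  apply: ltW; apply: lt_le_trans (truncnS_gt _) _.
  by rewrite ler_nat; apply: ltn_expl.
have [e0 He0] := lin_exp (4 * A + 2) (2 * (D + A * K.+1 + 2)).
have mpre : forall v (A0 : set nat), vtx c v -> measurable (Rad v @^-1` A0).
  by move=> v A0; exact: (@meas_pre c d T Rad Hmeas v A0).
pose r := rr K e0.
pose L := LL K e0.
pose q j : R := Z / ((r j).+1%:R `^ alpha).
have rpos j : (0 < r j)%N by apply: rr_pos.
have Pq j v : vtx c v -> P (Rad v @^-1` [set r j]) = (q j)%:E.
  by move=> Hv; rewrite Hdist.
have q01 j : 0 <= q j <= 1.
  have h1 := probability_le1 P (Hmeas [::] (r j) (vtx_nil c)).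
  rewrite Pq in h1; last exact: vtx_nil.
  have h2 : (0 <= (q j)%:E)%E by rewrite -(Pq j [::]) //; exact: measure_ge0.
  by apply/andP; split; rewrite -lee_fin.
have q0pos : 0 < q 0 by rewrite divr_gt0 // powR_gt0 // ltr0n.
pose Bad0 := Rad [::] @^-1` [set k | k != r 0%N].
pose B j := \bigcup_(u in [set` ext c [::] (L j)])
   \bigcap_(w in [set` ext c u (r j)]) Rad w @^-1` [set k | k != r j.+1].
have mB j : measurable (B j).
  apply: fin_bigcup_measurable; first by apply/finite_seqP; eexists.
  move=> u /= Hu; apply: fin_bigcap_measurable; first by apply/finite_seqP; eexists.
  move=> w /= Hw; apply: mpre => //.
  by apply: (ext_vtx _ Hw); exact: ext_vtx (vtx_nil c) Hu.
have mBad0 : measurable Bad0 by apply: mpre.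
pose Bad := Bad0 `|` \bigcup_j B j.
have mBad : measurable Bad by apply: measurableU => //; exact: bigcupT_measurable.
have sub : ~` Bad `<=` survival c Rad.
  move=> w /= nB.
  apply: (@chain c d T Rad r L) => //.
  - exact: LL_ge.
  - apply: contrapT => H; apply: nB; left; rewrite /Bad0 /=; exact/eqP.
  - move=> j u Hu; apply: contrapT => Hno; apply: nB; right; exists j => //.
    exists u => // w' /= Hw'; apply/eqP => E; apply: Hno; by exists w'.
have PB j : (P (B j) <= ((q 0%N / 2) / (2 ^ j.+1)%:R)%:E)%E.
  pose nj := (\prod_(L j <= k < L j + r j) minn (c k) 2)%N.
  pose x := (1 - q j.+1) ^+ nj.
  apply: (le_trans (@union_bound R d T P (ext c [::] (L j))
    (fun u => \bigcap_(w in [set` ext c u (r j)]) Rad w @^-1` [set k | k != r j.+1]) x _ _)).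
  - move=> u Hu; apply: fin_bigcap_measurable; first by apply/finite_seqP; eexists.
    move=> w /= Hw; apply: mpre.
    by apply: (ext_vtx _ Hw); exact: ext_vtx (vtx_nil c) Hu.
  - move=> u Hu /=.
    have Hvu : vtx c u by exact: ext_vtx (vtx_nil c) Hu.
    rewrite (@avoid_prob R c d T P Rad Hmeas Hind (ext c u (r j)) (r j.+1) (q j.+1)).
    + by rewrite size_ext (ext_size Hu) add0n.
    + exact: ext_uniq.
    + by move=> v Hv; exact: ext_vtx Hvu Hv.
    + by move=> v Hv; apply: Pq; exact: ext_vtx Hvu Hv.
  have -> : q 0%N / 2 / (2 ^ j.+1)%:R = q 0%N / (2 ^ j.+2)%:R.
    by rewrite [in RHS]expnS natrM invfM mulrA.
  rewrite lee_fin -[x *+ _]mulr_natl.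
  have Hq1 := q01 j.+1.
  apply: (@key_real R (q j.+1) (q 0%N) Z CK (2 ^ (A * ee K e0 j.+1))%:R
     (2 ^ (A * ee K e0 0))%:R (2 ^ D)%:R (2 ^ L j)%:R (2 ^ j.+2)%:R
     (2 ^ (2 ^ ee K e0 j))%:R (size (ext c [::] (L j)))%:R nj%:R) => //.
  all: try by rewrite ltr0n expn_gt0.
  - exact: q_lower.
  - exact: q_lower.
  - by rewrite ler_nat; exact: size_ext_le.
  - by rewrite ler_nat; exact: window_pow.
  - rewrite -!natrM -!expnD ler_nat; apply: leq_pexp2l => //.
    have := cond_nat Kpos He0 j; rewrite /L; lia.
  - by apply: exprn_ge0; move/andP: Hq1 => [_ h]; rewrite subr_ge0.
  - have hb := bern nj Hq1.
    have u0 : 0 <= x by apply: exprn_ge0; move/andP: Hq1 => [_ h]; rewrite subr_ge0.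
    apply: le_trans hb; apply: ler_wpM2l => //.
    have h0 : 0 <= nj%:R * q j.+1 by apply: mulr_ge0 => //; case/andP: Hq1.
    lra.
have PBad0 : P Bad0 = (1 - q 0%N)%:E.
  rewrite /Bad0 (@prob_neq R c d T P Rad Hmeas [::] (r 0%N) (vtx_nil c)).
  by have := Pq 0%N [::] (vtx_nil c); move=> ->; rewrite EFinB.
have q0h : 0 <= q 0%N / 2 by apply: divr_ge0 => //; exact: ltW.
have PU : (P (\bigcup_j B j) <= (q 0%N / 2)%:E)%E.
  apply: (le_trans (@measure_sigma_subadditive _ _ _ P (\bigcup_j B j) B mB _ _)).
  - exact: bigcupT_measurable.
  - by [].
  apply: le_trans (epsilon_trick0 xpredT q0h).
  apply: lee_nneseries => [i _ _|n _]; first exact: measure_ge0.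
  exact: PB.
have PBad : (P Bad <= (1 - q 0%N / 2)%:E)%E.
  apply: (le_trans (measureU2 P mBad0 _)); first exact: bigcupT_measurable.
  apply: (@le_trans _ _ ((1 - q 0%N)%:E + (q 0%N / 2)%:E)%E); last first.
    by rewrite -EFinD lee_fin; lra.
  apply: leeD => //.
  exact: (eq_ind_r (fun z => (z <= (1 - q 0%N)%:E)%E) (lexx _) PBad0).
have PC : (0 < P (~` Bad))%E.
  rewrite probability_setC //.
  move: PBad (measure_ge0 P Bad); case: (P Bad) => [b| |] //=.
  - move=> h1 _; rewrite lee_fin in h1.
    have -> : (1 + (- b)%:E)%E = (1 - b)%:E by [].
    rewrite lte_fin; lra.
  - by move=> _ _; rewrite addey.
apply: lt_le_trans PC _; apply: le_measure; rewrite ?inE.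
- exact: measurableC.
- exact: (@survival_meas c d T Rad Hmeas).
- exact: sub.
Qed.
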